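(* Let $(R,\mathfrak{m})$ be a finite commutative local ring with identity such that $\mathfrak{m}$ is not a principal ideal, and let $I$ be a proper ideal of $R$ (so $I\subseteq\mathfrak m$). If $\Gamma''_I(R)$ is planar, then $\operatorname{ara}(\mathfrak{m}/I)\leq 4$.
   Context: For an ideal $K$ of a finite commutative ring, $\operatorname{ara}(K)$ denotes the smallest of the cardinalities of minimal generating sets of $K$; here $\mathfrak m/I$ is regarded as an ideal of $R/I$. For an ideal $I$ of $R$, $\Gamma''_I(R)$ is the simple undirected graph whose vertex set is $\{x\in R\setminus I : xR+I\neq R\}$, with distinct vertices $x,y$ adjacent if and only if $x\notin yR+I$ and $y\notin xR+I$. A graph is planar if it can be drawn in the plane with edges meeting only at their endpoints. *)

(* Defs.v *)
From HB Require Import structures.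
From mathcomp Require Import all_boot all_order all_algebra.
From mathcomp Require Import all_classical all_reals all_analysis.
From mathcomp Require Import Rstruct Rstruct_topology.
From Stdlib Require Rdefinitions.

Set Implicit Arguments.
Unset Strict Implicit.
Unset Printing Implicit Defensive.

Import Order.TTheory GRing.Theory Num.Theory.
Local Open Scope ring_scope.

Section RingIdeals.
Variable R : finComNzRingType.

Definition is_idl (J : {set R}) : Prop :=
  0 \in J /\ (forall x y, x \in J -> y \in J -> x + y \in J) /\
  (forall r x, x \in J -> r * x \in J).

Definition proper_idl (J : {set R}) : Prop := is_idl J /\ J != [set: R]%SET.

Definition local_with_max (m : {set R}) : Prop :=
  proper_idl m /\ forall J, proper_idl J -> J \subset m.

Definition ideal_gen (S : {set R}) : {set R} :=
  [set x | [exists c : {ffun R -> R}, x == \sum_(s in S) c s * s]].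

Definition principal_ideal (J : {set R}) : Prop := exists x : R, J = ideal_gen [set x].

Definition ideal_add (J I : {set R}) : {set R} :=
  [set z | [exists x in J, exists y in I, z == x + y]].

Definition xRI (x : R) (I : {set R}) : {set R} := ideal_add (ideal_gen [set x]) I.

Definition GammaI_vert (I : {set R}) : {set R} :=
  [set x | (x \notin I) && (xRI x I != [set: R]%SET)].

Definition GammaI_adj (I : {set R}) (x y : R) : bool :=
  [&& x \in GammaI_vert I, y \in GammaI_vert I, x != y,
      x \notin xRI y I & y \notin xRI x I].

(* Elements of R/I are modelled as cosets s + I (as subsets of R). *)
Definition cosetI (I : {set R}) (s : R) : {set R} := [set s + i | i in I].

Definition imgI (I S : {set R}) : {set {set R}} := [set cosetI I s | s in S].

(* The images of the elements of S generate the ideal m/I of R/I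
   iff (S) + I = m. *)
Definition gens_mod (I m S : {set R}) : bool := ideal_add (ideal_gen S) I == m.

(* S lifts a minimal generating set of m/I: its image generates m/I and no
   proper subset of the image (= image of a subset T of S) generates m/I. *)
Definition min_gens_mod (I m S : {set R}) : bool :=
  gens_mod I m S &&
  [forall T : {set R}, (T \subset S) && gens_mod I m T ==> (imgI I T == imgI I S)].

(* ara(m/I): the smallest cardinality of a minimal generating set of m/I
   (the default #|R| is never reached, a minimal generating set exists). *)
Definition ara_mod (I m : {set R}) : nat :=
  \big[minn/#|R|]_(S : {set R} | min_gens_mod I m S) #|imgI I S|.

End RingIdeals.

Local Open Scope classical_set_scope.

Definition planar (T : finType) (V : {set T}) (adj : rel T) : Prop :=
  exists (p : T -> Rdefinitions.R * Rdefinitions.R)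
         (arc : T -> T -> Rdefinitions.R -> Rdefinitions.R * Rdefinitions.R),
    {in V &, injective p} /\
    (forall x y, x \in V -> y \in V -> adj x y ->
       [/\ {within `[0%R, 1%R], continuous (arc x y)},
           {in `[0%R, 1%R] &, injective (arc x y)},
           arc x y 0%R = p x, arc x y 1%R = p y &
           forall z t, z \in V -> (0 < t < 1)%R -> arc x y t <> p z]) /\
    (forall x y u v s t, x \in V -> y \in V -> u \in V -> v \in V ->
       adj x y -> adj u v -> (0 < s < 1)%R -> (0 < t < 1)%R ->
       arc x y s = arc u v t -> [set x; y]%SET = [set u; v]%SET).

(* Main.v *)
Require Import Defs.
From HB Require Import structures.
From mathcomp Require Import all_boot all_order all_algebra.
From mathcomp Require Import all_classical all_reals all_analysis.
From mathcomp Require Import Rstruct Rstruct_topology.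
From mathcomp Require Import ring lra zify.
Set Implicit Arguments. Unset Strict Implicit. Unset Printing Implicit Defensive.
Import Order.TTheory GRing.Theory Num.Theory.
Local Open Scope ring_scope.

Definition dl (a b : nat) : int :=
  match ((b + 4 - a) %% 4)%N with 0%N => 0 | 1%N => 1 | 3%N => -1 | _ => 2 end.

Definition nopp (a b : nat) : bool := ((b + 4 - a) %% 4)%N != 2%N.

Lemma dl_cell a b c d : (a < 4)%N -> (b < 4)%N -> (c < 4)%N -> (d < 4)%N ->
  nopp a b -> nopp b c -> nopp c d -> nopp d a -> nopp a c -> nopp b d ->
  dl a b + dl b c + dl c d + dl d a = 0.
Proof.
by move: a b c d; do 4!(case=> [|[|[|[|?]]]] //).
Qed.

Lemma dl_anti a b : (a < 4)%N -> (b < 4)%N -> nopp a b -> dl b a = - dl a b.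
Proof. by move: a b; do 2!(case=> [|[|[|[|?]]]] //). Qed.

Lemma dl_shift a b : (a < 4)%N -> (b < 4)%N ->
  dl ((a + 2) %% 4) ((b + 2) %% 4) = dl a b.
Proof. by move: a b; do 2!(case=> [|[|[|[|?]]]] //). Qed.

Lemma dl_mod a b : (a < 4)%N -> (b < 4)%N ->
  exists k : int, dl a b = b%:Z - a%:Z + 4 * k.
Proof.
move: a b; do 2!(case=> [|[|[|[|?]]]] //);
  move=> *; first [by exists 0 | by exists 1 | by exists (-1)].
Qed.

Fixpoint Sum (F : nat -> int) (n : nat) : int :=
  if n is n'.+1 then Sum F n' + F n' else 0.

Section Walk.
Variable T : Type.
Variable q : T -> nat.
Hypothesis q4 : forall x, (q x < 4)%N.
Variable ok : T -> T -> bool.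
Hypothesis ok_nopp : forall x y, ok x y -> nopp (q x) (q y).

Definition W (f : nat -> T) (N : nat) : int :=
  Sum (fun i => dl (q (f i)) (q (f i.+1))) N.

Lemma W_mod f N : exists k : int, W f N = (q (f N))%:Z - (q (f 0%N))%:Z + 4 * k.
Proof.
elim: N => [|N [k IH]]; first by exists 0; rewrite /W /=; lia.
have [k' Hk'] := dl_mod (q4 (f N)) (q4 (f N.+1)).
exists (k + k'); rewrite /W /= -/(W f N) IH Hk'; lia.
Qed.

Lemma W_grid (G : nat -> nat -> T) N :
  (forall i j, (i < N)%N -> (j < N)%N ->
    [/\ ok (G i j) (G i.+1 j), ok (G i.+1 j) (G i.+1 j.+1),
        ok (G i.+1 j.+1) (G i j.+1), ok (G i j.+1) (G i j) &
        ok (G i j) (G i.+1 j.+1) /\ ok (G i.+1 j) (G i j.+1)]) ->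
  W (fun i => G i 0%N) N + W (fun j => G N j) N
  - W (fun i => G i N) N - W (fun j => G 0%N j) N = 0.
Proof.
move=> cellok.
pose h i j := dl (q (G i j)) (q (G i.+1 j)).
pose v i j := dl (q (G i j)) (q (G i j.+1)).
have cell i j : (i < N)%N -> (j < N)%N -> h i j + v i.+1 j - h i j.+1 - v i j = 0.
  move=> iN jN; have [hc1 hc2 hc3 hc4 [hc5 hc6]] := cellok i j iN jN.
  have := dl_cell (q4 _) (q4 _) (q4 _) (q4 _) (ok_nopp hc1) (ok_nopp hc2) (ok_nopp hc3)
    (ok_nopp hc4) (ok_nopp hc5) (ok_nopp hc6).
  rewrite /h /v (dl_anti (q4 _) (q4 _) (ok_nopp hc3)).
  rewrite (dl_anti (q4 _) (q4 _) (ok_nopp hc4)); lia.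
have row j : (j < N)%N -> forall n, (n <= N)%N ->
    Sum (fun i => h i j) n - Sum (fun i => h i j.+1) n = v 0%N j - v n j.
  move=> jN; elim=> [|n IH] nN /=; first lia.
  have := IH (ltnW nN); have := cell n j nN jN; lia.
have col : forall m, (m <= N)%N ->
    Sum (fun i => h i 0%N) N - Sum (fun i => h i m) N =
    Sum (fun j => v 0%N j) m - Sum (fun j => v N j) m.
  elim=> [|m IH] mN /=; first lia.
  have := IH (ltnW mN); have := row m mN N (leqnn N); lia.
have := col N (leqnn N); rewrite /W /h /v; lia.
Qed.
End Walk.

Section Quad.
Variable R : realFieldType.
Implicit Types u v w : R * R.

Definition quad w : nat :=
  if (0 < w.1) && (0 <= w.2) then 0%N
  else if (w.1 <= 0) && (0 < w.2) then 1%N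
  else if (w.1 < 0) && (w.2 <= 0) then 2%N else 3%N.

Definition dotp u v : R := u.1 * v.1 + u.2 * v.2.
Definition sub2 u v : R * R := (u.1 - v.1, u.2 - v.2).


Definition neg2 w : R * R := (- w.1, - w.2).

Lemma quad_neg w : w != (0, 0) -> quad (neg2 w) = ((quad w + 2) %% 4)%N.
Proof.
case: w => a b /= H.
have H' : (a != 0) || (b != 0).
  by apply: contraR H; rewrite negb_or !negbK => /andP[/eqP-> /eqP->].
rewrite /quad /= !oppr_gt0 !oppr_ge0 !oppr_le0 !oppr_lt0.
case: (ltgtP a 0) H' => ha; case: (ltgtP b 0) => hb //= H'; rewrite ?ha ?hb ?(ltW ha) ?(ltW hb) ?lexx ?ltxx //=.
all: try by rewrite ltNge (ltW ha).
all: try by rewrite ltNge (ltW hb).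
Qed.

Lemma quad_lt4 w : (quad w < 4)%N.
Proof. by rewrite /quad; repeat case: ifP. Qed.

Lemma dotp_nopp u v : 0 < dotp u v -> nopp (quad u) (quad v).
Proof.
rewrite /dotp /nopp /quad; case: u v => [u1 u2] [v1 v2] /=.
have r1 := (@real_leVge R 0 u1 (num_real _) (num_real _)).
repeat (case: ifP => /=; rewrite ?ltNge ?leNge => /andP || move=> /negP /negP);
  move=> *; nra.
Qed.

Lemma neg2_neq0 w : neg2 w != (0, 0) -> w != (0, 0).
Proof. by apply: contra => /eqP ->; rewrite /neg2 /= oppr0. Qed.

Lemma W_neg (f : nat -> R * R) N : (forall m, (m <= N)%N -> f m != (0, 0)) ->
  W quad (fun m => neg2 (f m)) N = W quad f N.
Proof.
elim: N => [|N IH] H; first by [].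
rewrite /W /= -/(W quad (fun m => neg2 (f m)) N) -/(W quad f N) IH; last first.
  by move=> m hm; apply: H; apply: ltnW.
by rewrite !quad_neg ?H // dl_shift ?quad_lt4.
Qed.
End Quad.

Definition L15 : seq (nat * nat * nat * nat) := [:: (0,1,2,3)%N; (0,1,2,4)%N; (0,1,3,4)%N; (0,2,1,3)%N; (0,2,1,4)%N; (0,2,3,4)%N; (0,3,1,2)%N; (0,3,1,4)%N; (0,3,2,4)%N; (0,4,1,2)%N; (0,4,1,3)%N; (0,4,2,3)%N; (1,2,3,4)%N; (1,3,2,4)%N; (1,4,2,3)%N].
Definition L30 : seq (nat * nat * nat) := [:: (0,1,2)%N; (0,1,3)%N; (0,1,4)%N; (0,2,1)%N; (0,2,3)%N; (0,2,4)%N; (0,3,1)%N; (0,3,2)%N; (0,3,4)%N; (0,4,1)%N; (0,4,2)%N; (0,4,3)%N; (1,2,0)%N; (1,2,3)%N; (1,2,4)%N; (1,3,0)%N; (1,3,2)%N; (1,3,4)%N; (1,4,0)%N; (1,4,2)%N; (1,4,3)%N; (2,3,0)%N; (2,3,1)%N; (2,3,4)%N; (2,4,0)%N; (2,4,1)%N; (2,4,3)%N; (3,4,0)%N; (3,4,1)%N; (3,4,2)%N].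

Definition allPr {X : Type} (P : X -> Prop) (l : seq X) : Prop :=
  foldr (fun x acc => P x /\ acc) True l.

Lemma allPrP {X : eqType} (P : X -> Prop) l : (forall x, x \in l -> P x) -> allPr P l.
Proof.
elim: l => [|x l IH] H //=; split; first by apply: H; rewrite inE eqxx.
by apply: IH => y yl; apply: H; rewrite inE yl orbT.
Qed.

Definition L10 : seq (nat * nat) :=
  [:: (0,1)%N; (0,2)%N; (0,3)%N; (0,4)%N; (1,2)%N; (1,3)%N; (1,4)%N; (2,3)%N; (2,4)%N; (3,4)%N].

Lemma final_contra (T : nat -> nat -> nat -> int) (qd : nat -> nat -> nat) :
  allPr (fun x => let: (i, j, k, l) := x in
          T i j k + T k l j - T i j l - T k l i = 0) L15 ->
  allPr (fun x => let: (i, j, k) := x in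
          exists n : int, T i j k = (qd j k)%:Z - (qd i k)%:Z + 4 * n) L30 ->
  allPr (fun x => let: (j, k) := x in
          exists n : int, (qd k j)%:Z = (qd j k)%:Z + 2 + 4 * n) L10 -> False.
Proof.
rewrite /allPr /=.
move=> E C D.
repeat match goal with H : _ /\ _ |- _ => destruct H end.
repeat match goal with H : exists _, _ |- _ => destruct H end.
lia.
Qed.

Section Ana.
Local Open Scope classical_set_scope.
Local Notation R := Rdefinitions.R.
Definition clamp (s : R) : R := Num.max 0 (Num.min 1 s).

Lemma clamp_in s : (`[0, 1]%classic : set R) (clamp s).
Proof.
rewrite /= in_itv /= /clamp; apply/andP; split; first by rewrite le_max lexx.
by rewrite ge_max ler01 ge_min lexx.
Qed.

Lemma clampE s : 0 <= s <= 1 -> clamp s = s.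
Proof.
move=> /andP[s0 s1]; rewrite /clamp.
by rewrite (min_r s1) (max_r s0).
Qed.

Lemma clamp_cont : continuous clamp.
Proof.
have -> : clamp = (cst 0 \max (cst 1 \min id)) by apply/funext => s.
move=> x; apply: continuous_max; first exact: cvg_cst.
by apply: continuous_min; [exact: cvg_cst | exact: cvg_id].
Qed.

Lemma within_clamp (X : topologicalType) (e : R -> X) :
  {within `[0, 1], continuous e} -> continuous (e \o clamp).
Proof.
move=> /(subspace_continuousP) ce x.
have cx := ce _ (clamp_in x).
apply: cvg_comp cx => W /= HW.
have H : nbhs x (fun y => `[0, 1]%classic (clamp y) -> W (clamp y)) := clamp_cont HW.
apply: (filterS _ H) => y /= Hy; apply: Hy; exact: clamp_in.
Qed.

Lemma cD (T : topologicalType) (a b : T -> R^o) : continuous a -> continuous b -> continuous (fun z => a z + b z).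
Proof. move=> ca cb z. exact: (cvgD (ca z) (cb z)). Qed.
Lemma cM (T : topologicalType) (a b : T -> R^o) : continuous a -> continuous b -> continuous (fun z => a z * b z).
Proof. move=> ca cb z. exact: (cvgM (ca z) (cb z)). Qed.
Lemma cB (T : topologicalType) (a b : T -> R^o) : continuous a -> continuous b -> continuous (fun z => a z - b z).
Proof. move=> ca cb z. exact: (cvgB (ca z) (cb z)). Qed.
Lemma cN (T : topologicalType) (a : T -> R^o) : continuous a -> continuous (fun z => `|a z|).
Proof. move=> ca z. exact: (cvg_norm (ca z)). Qed.
Lemma fst_cont (X Y : topologicalType) : continuous (@fst X Y).
Proof. move=> x; exact: cvg_fst. Qed.
Lemma snd_cont (X Y : topologicalType) : continuous (@snd X Y).
Proof. move=> x; exact: cvg_snd. Qed.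

Section Psi.
Variables e1 e2 f1 f2 : R -> R.
Hypotheses (ce1 : continuous e1) (ce2 : continuous e2) (cf1 : continuous f1) (cf2 : continuous f2).
Definition Dz (z : (R * R) * (R * R)) : R :=
  (e1 z.1.1 - f1 z.1.2) * (e1 z.2.1 - f1 z.2.2) + (e2 z.1.1 - f2 z.1.2) * (e2 z.2.1 - f2 z.2.2).
Definition psi (z : (R * R) * (R * R)) : R :=
  (z.1.1 - z.2.1) * (z.1.1 - z.2.1) + (z.1.2 - z.2.2) * (z.1.2 - z.2.2) + (`|Dz z| + Dz z).

Lemma psi_cont : continuous psi.
Proof.
have c11 : continuous (fun z : (R * R) * (R * R) => z.1.1).
  by move=> z; exact: (continuous_comp (@fst_cont _ _ z) (@fst_cont _ _ _)).
have c12 : continuous (fun z : (R * R) * (R * R) => z.1.2).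
  by move=> z; exact: (continuous_comp (@fst_cont _ _ z) (@snd_cont _ _ _)).
have c21 : continuous (fun z : (R * R) * (R * R) => z.2.1).
  by move=> z; exact: (continuous_comp (@snd_cont _ _ z) (@fst_cont _ _ _)).
have c22 : continuous (fun z : (R * R) * (R * R) => z.2.2).
  by move=> z; exact: (continuous_comp (@snd_cont _ _ z) (@snd_cont _ _ _)).
have cc (g : R -> R) (h : (R * R) * (R * R) -> R) : continuous g -> continuous h ->
   continuous (fun z => g (h z)).
  by move=> cg ch z; apply: (continuous_comp (ch z) (cg _)).
have cDz : continuous Dz.
  by rewrite /Dz; apply: cD; apply: cM; apply: cB; apply: cc.
rewrite /psi; apply: cD; first by apply: cD; apply: cM; apply: cB.
by apply: cD; [apply: cN|].
Qed.
End Psi.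

Lemma absD_ge0 (x : R) : 0 <= `|x| + x.
Proof. by have := ler_norm (- x); rewrite normrN; lra. Qed.

Section Grid.
Variables e1 e2 f1 f2 : R -> R.
Hypotheses (ce1 : continuous e1) (ce2 : continuous e2) (cf1 : continuous f1) (cf2 : continuous f2).
Hypothesis disj : forall s t : R, 0 <= s <= 1 -> 0 <= t <= 1 ->
  (e1 s != f1 t) || (e2 s != f2 t).

Let I01 : set R := `[0, 1]%classic.
Let K : set ((R * R) * (R * R)) := (I01 `*` I01) `*` (I01 `*` I01).

Lemma K_compact : compact K.
Proof. by apply: compact_setX; apply: compact_setX; apply: segment_compact. Qed.

Lemma inK s t s' t' : 0 <= s <= 1 -> 0 <= t <= 1 -> 0 <= s' <= 1 -> 0 <= t' <= 1 ->
  ((s, t), (s', t')) \in K.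
Proof.
by move=> *; rewrite inE /K /I01 /= !in_itv /=; split; split.
Qed.

Lemma Kin z : z \in K -> [/\ 0 <= z.1.1 <= 1, 0 <= z.1.2 <= 1, 0 <= z.2.1 <= 1 & 0 <= z.2.2 <= 1].
Proof.
by rewrite inE /K /I01 /= !in_itv /= => -[[-> ->] [-> ->]].
Qed.

Lemma grid_ok : exists N0 : nat, (0 < N0)%N /\ forall N : nat, (N0 <= N)%N ->
  forall n m n' m' : nat,
   (n <= N)%N -> (m <= N)%N -> (n' <= N)%N -> (m' <= N)%N ->
   (n' <= n.+1)%N -> (n <= n'.+1)%N -> (m' <= m.+1)%N -> (m <= m'.+1)%N ->
   0 < Dz e1 e2 f1 f2 ((n%:R / N%:R, m%:R / N%:R), (n'%:R / N%:R, m'%:R / N%:R)).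
Proof.
have K0 : K !=set0 by exists ((0, 0), (0, 0)); rewrite /K /I01 /= !in_itv /= ler01 lexx.
have pc : continuous (psi e1 e2 f1 f2) by move=> x; exact: psi_cont.
have [c cK cmin] := compact_EVT_min K0 K_compact (@continuous_subspaceT _ _ K _ pc).
set mu := psi e1 e2 f1 f2 c.
have mu0 : 0 < mu.
  have [h1 h2 h3 h4] := Kin cK.
  rewrite /mu /psi /Dz; case: c cK h1 h2 h3 h4 {mu cmin} => [[s t] [s' t']] /= _ h1 h2 h3 h4.
  have HD := absD_ge0 ((e1 s - f1 t) * (e1 s' - f1 t') + (e2 s - f2 t) * (e2 s' - f2 t')).
  have [/eqP es|ns] := boolP (s == s'); last first.
    have : 0 < (s - s') * (s - s') by rewrite lt0r mulf_eq0 orbb subr_eq0 (negbTE ns) /= -expr2 sqr_ge0.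
    have : 0 <= (t - t') * (t - t') by rewrite -expr2 sqr_ge0. lra.
  have [/eqP et|nt] := boolP (t == t'); last first.
    have : 0 < (t - t') * (t - t') by rewrite lt0r mulf_eq0 orbb subr_eq0 (negbTE nt) /= -expr2 sqr_ge0.
    have : 0 <= (s - s') * (s - s') by rewrite -expr2 sqr_ge0. lra.
  subst s' t'; have HA : 0 <= (e1 s - f1 t) * (e1 s - f1 t) by rewrite -expr2 sqr_ge0.
  have HB : 0 <= (e2 s - f2 t) * (e2 s - f2 t) by rewrite -expr2 sqr_ge0.
  rewrite ger0_norm; last lra.
  have := disj h1 h2; case/orP => hne.
    have : 0 < (e1 s - f1 t) * (e1 s - f1 t).
      by rewrite lt0r mulf_eq0 orbb subr_eq0 (negbTE hne) /= -expr2 sqr_ge0.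
    lra.
  have : 0 < (e2 s - f2 t) * (e2 s - f2 t).
    by rewrite lt0r mulf_eq0 orbb subr_eq0 (negbTE hne) /= -expr2 sqr_ge0.
  lra.
exists (Num.truncn (4 / mu)).+1; split => // N hN n m n' m' hn hm hn' hm' a1 a2 b1 b2.
have Npos : (0 < N)%N by apply: leq_trans hN.
set Nr : R := N%:R.
have Nr1 : 1 <= Nr by rewrite /Nr ler1n.
have Nmu : 4 < Nr * mu.
  rewrite -ltr_pdivrMr //; apply: (lt_le_trans (truncnS_gt _)).
  by rewrite /Nr ler_nat.
have fr k : (k <= N)%N -> 0 <= k%:R / Nr <= 1.
  move=> kN; rewrite divr_ge0 ?ler0n //= ler_pdivrMr ?mul1r ?ler_nat //.
  by rewrite /Nr ltr0n.
have zK := inK (fr _ hn) (fr _ hm) (fr _ hn') (fr _ hm').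
have := cmin _ zK; rewrite -/mu /psi /=.
set D := Dz e1 e2 f1 f2 (n%:R / Nr, m%:R / Nr, (n'%:R / Nr, m'%:R / Nr)).
have sq1 (k k' : nat) : (k' <= k.+1)%N -> (k <= k'.+1)%N ->
    (k%:R / Nr - k'%:R / Nr) * (k%:R / Nr - k'%:R / Nr) * (Nr * Nr) <= 1.
  move=> h1 h2.
  have -> : (k%:R / Nr - k'%:R / Nr) * (k%:R / Nr - k'%:R / Nr) * (Nr * Nr)
     = (k%:R - k'%:R) * (k%:R - k'%:R).
    by field; rewrite /Nr pnatr_eq0 -lt0n.
  have : (k' = k.+1 \/ k' = k \/ k = k'.+1) by lia.
  by case=> [->|[->|->]]; rewrite ?natrS; lra.
have s1 := sq1 _ _ a1 a2; have s2 := sq1 _ _ b1 b2.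
set A := (_ / Nr - _ / Nr) * _ in s1 *; set B := (_ / Nr - _ / Nr) * _ in s2 *.
have A0 : 0 <= A by rewrite /A -expr2 sqr_ge0.
have B0 : 0 <= B by rewrite /B -expr2 sqr_ge0.
move=> Hmu; rewrite ltNge; apply/negP => D0.
have HD0 : `|D| + D = 0 by rewrite ler0_norm // addNr.
rewrite HD0 addr0 in Hmu.
nra.
Qed.
End Grid.

End Ana.

Lemma ev_list {X : eqType} (Q : X -> nat -> Prop) (l : seq X) :
  (forall x, x \in l -> exists N0, (0 < N0)%N /\ forall N, (N0 <= N)%N -> Q x N) ->
  exists N0, (0 < N0)%N /\ forall N, (N0 <= N)%N -> forall x, x \in l -> Q x N.
Proof.
elim: l => [|y l IH] H; first by exists 1%N.
have [N1 [N1p H1]] := H y (mem_head _ _).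
have [N2 [N2p H2]] : exists N0, (0 < N0)%N /\ forall N, (N0 <= N)%N -> forall x, x \in l -> Q x N.
  by apply: IH => x xl; apply: H; rewrite inE xl orbT.
exists (maxn N1 N2); split; first by rewrite leq_max N1p.
move=> N; rewrite geq_max => /andP[h1 h2] x; rewrite inE => /orP[/eqP->|xl].
  exact: H1.
exact: H2.
Qed.

Definition good4 (x : nat * nat * nat * nat) : bool :=
  let: (i, j, k, l) := x in
  [&& (i < 5)%N, (j < 5)%N, (k < 5)%N, (l < 5)%N, (i != j) && (i != k),
      (i != l) && (j != k) & (j != l) && (k != l)].

Lemma good_L15 x : x \in L15 -> good4 x.
Proof. by move: x; apply/allP. Qed.

Definition good3 (x : nat * nat * nat) : bool :=
  let: (i, j, k) := x in
  [&& (i < 5)%N, (j < 5)%N, (k < 5)%N, i != j, i != k & j != k].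

Lemma good_L30 x : x \in L30 -> good3 x.
Proof. by move: x; apply/allP. Qed.

Lemma good_L10 x : x \in L10 -> (x.1 < 5)%N && (x.2 < 5)%N && (x.1 != x.2).
Proof. by move: x; apply/allP. Qed.

Lemma dotp_self_neq0 (w : Rdefinitions.R * Rdefinitions.R) : 0 < dotp w w -> w != (0, 0).
Proof. by apply: contraL => /eqP ->; rewrite /dotp /= mul0r addr0 ltxx. Qed.

Lemma mod4_shift (a : nat) : (a < 4)%N -> exists n : int, ((a + 2) %% 4)%N%:Z = a%:Z + 2 + 4 * n.
Proof. by case: a => [|[|[|[|]]]] // _; [exists 0|exists 0|exists (-1)|exists (-1)]. Qed.

Section K5.
Local Open Scope classical_set_scope.
Local Notation R := Rdefinitions.R.

Lemma K5_nonplanar (T : finType) (V : {set T}) (adj : rel T) (vv : nat -> T) :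
  planar V adj -> (forall i, (i < 5)%N -> vv i \in V) ->
  (forall i j, (i < 5)%N -> (j < 5)%N -> i != j -> adj (vv i) (vv j)) ->
  (forall i j, (i < 5)%N -> (j < 5)%N -> i != j -> vv i != vv j) -> False.
Proof.
move=> [p [arc [pinj [harc hcross]]]] Vv Av Dv.
pose P i := p (vv i).
pose al i j := fun s => arc (vv i) (vv j) (clamp s).
have H i j : (i < 5)%N -> (j < 5)%N -> i != j -> _ :=
  fun hi hj hij => harc _ _ (Vv i hi) (Vv j hj) (Av i j hi hj hij).
have cal i j : (i < 5)%N -> (j < 5)%N -> i != j -> continuous (al i j).
  by move=> hi hj hij; case: (H i j hi hj hij) => c _ _ _ _; exact: within_clamp.
have al0 i j : (i < 5)%N -> (j < 5)%N -> i != j -> al i j 0 = P i.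
  move=> hi hj hij; case: (H i j hi hj hij) => _ _ h0 _ _.
  by rewrite /al clampE ?h0 // lexx ler01.
have al1 i j : (i < 5)%N -> (j < 5)%N -> i != j -> al i j 1 = P j.
  move=> hi hj hij; case: (H i j hi hj hij) => _ _ _ h1 _.
  by rewrite /al clampE ?h1 // lexx ler01.
have alin i j z s : (i < 5)%N -> (j < 5)%N -> i != j -> (z < 5)%N -> 0 < s < 1 ->
    al i j s != P z.
  move=> hi hj hij hz /andP[s0 s1]; case: (H i j hi hj hij) => _ _ _ _ hav.
  by rewrite /al clampE ?(ltW s0) ?(ltW s1) //; apply/eqP; apply: hav => //; [exact: Vv|apply/andP].
have trich (s : R) : 0 <= s <= 1 -> [\/ s = 0, s = 1 | 0 < s < 1].
  move=> /andP[h0 h1]; have [->|n0] := eqVneq s 0; first by constructor 1.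
  have [->|n1] := eqVneq s 1; first by constructor 2.
  by constructor 3; rewrite lt_neqAle eq_sym n0 h0 lt_neqAle n1 h1.
have disj i j k l : good4 (i, j, k, l) -> forall s t, 0 <= s <= 1 -> 0 <= t <= 1 ->
    al i j s != al k l t.
  move=> /and5P[hi hj hk hl /and3P[/andP[dij dik] /andP[dil djk] /andP[djl dkl]]].
  have dji : j != i by rewrite eq_sym.
  have dki : k != i by rewrite eq_sym.
  have dli : l != i by rewrite eq_sym.
  have dkj : k != j by rewrite eq_sym.
  have dlj : l != j by rewrite eq_sym.
  have dlk : l != k by rewrite eq_sym.
  have pne a b : (a < 5)%N -> (b < 5)%N -> a != b -> P a != P b.
    move=> ha hb hab; apply/eqP => E; apply: (negP (Dv a b ha hb hab)); apply/eqP.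
    exact: pinj (Vv a ha) (Vv b hb) E.
  move=> s t hs ht; apply/eqP => E.
  case: (trich s hs) E => [->|->|hs'];
  case: (trich t ht) => [->|->|ht'];
  rewrite ?al0 ?al1 // => E.
  - by move/eqP: E; apply/negP; apply: pne.
  - by move/eqP: E; apply/negP; apply: pne.
  - by move: E => /esym /eqP; apply/negP; apply: alin.
  - by move/eqP: E; apply/negP; apply: pne.
  - by move/eqP: E; apply/negP; apply: pne.
  - by move: E => /esym /eqP; apply/negP; apply: alin.
  - by move/eqP: E; apply/negP; apply: alin.
  - by move/eqP: E; apply/negP; apply: alin.
  move: E; rewrite /al !clampE //.
  move=> E.
  have := hcross _ _ _ _ _ _ (Vv i hi) (Vv j hj) (Vv k hk) (Vv l hl)
    (Av i j hi hj dij) (Av k l hk hl dkl) hs' ht' E.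
  move=> Hs; have : vv i \in [set vv k; vv l]%SET by rewrite -Hs !inE eqxx.
  rewrite !inE => /orP[] /eqP Ev.
    by move: (Dv i k hi hk dik); rewrite Ev eqxx.
  by move: (Dv i l hi hl dil); rewrite Ev eqxx.
pose e1 i j s := (al i j s).1.
pose e2 i j s := (al i j s).2.
pose Qg (x : nat * nat * nat * nat) (N : nat) : Prop := let: (i, j, k, l) := x in
  forall n m n' m' : nat,
   (n <= N)%N -> (m <= N)%N -> (n' <= N)%N -> (m' <= N)%N ->
   (n' <= n.+1)%N -> (n <= n'.+1)%N -> (m' <= m.+1)%N -> (m <= m'.+1)%N ->
   0 < Dz (e1 i j) (e2 i j) (e1 k l) (e2 k l)
         ((n%:R / N%:R, m%:R / N%:R), (n'%:R / N%:R, m'%:R / N%:R)).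
have ev : forall x, x \in L15 -> exists N0, (0 < N0)%N /\ forall N, (N0 <= N)%N -> Qg x N.
  move=> [[[i0 j0] k0] l0] /good_L15 g.
  have g' := g; move: g' => /and5P[hi hj hk hl /and3P[/andP[dij dik] /andP[dil djk] /andP[djl dkl]]].
  have ce i' j' : (i' < 5)%N -> (j' < 5)%N -> i' != j' -> continuous (e1 i' j') /\ continuous (e2 i' j').
    move=> hi' hj' hij'; split => x.
      exact: (continuous_comp (cal i' j' hi' hj' hij' x) (@fst_cont _ _ _)).
    exact: (continuous_comp (cal i' j' hi' hj' hij' x) (@snd_cont _ _ _)).
  have [c1 c2] := ce i0 j0 hi hj dij; have [c3 c4] := ce k0 l0 hk hl dkl.
  apply: (grid_ok c1 c2 c3 c4) => s t hs ht.
  have [h1|//] := eqVneq (e1 i0 j0 s) (e1 k0 l0 t).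
  have [h2|//] := eqVneq (e2 i0 j0 s) (e2 k0 l0 t).
  exfalso; apply/negP: (disj i0 j0 k0 l0 g s t hs ht); apply/negPn/eqP.
  move: h1 h2; rewrite /e1 /e2; case: (al i0 j0 s) => a b; case: (al k0 l0 t) => c d /= -> -> //.
have [N [Np HQ]] := ev_list ev.
pose fw i j k := fun n : nat => sub2 (al i j (n%:R / N%:R)) (P k).
pose Th i j k := W (@quad R) (fw i j k) N.
pose qd j k := quad (sub2 (P j) (P k)).
have NR : (N%:R : R) != 0 by rewrite pnatr_eq0 -lt0n.
apply: (@final_contra Th qd).
- apply: allPrP => -[[[i j] k] l] xin.
  have := good_L15 xin.
  move=> /and5P[hi hj hk hl /and3P[/andP[dij dik] /andP[dil djk] /andP[djl dkl]]].
  have Qx := HQ N (leqnn N) _ xin; rewrite /Qg in Qx.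
  pose G n m := sub2 (al i j (n%:R / N%:R)) (al k l (m%:R / N%:R)).
  have cells : forall a b, (a < N)%N -> (b < N)%N ->
    [/\ 0 < dotp (G a b) (G a.+1 b), 0 < dotp (G a.+1 b) (G a.+1 b.+1),
        0 < dotp (G a.+1 b.+1) (G a b.+1), 0 < dotp (G a b.+1) (G a b) &
        0 < dotp (G a b) (G a.+1 b.+1) /\ 0 < dotp (G a.+1 b) (G a b.+1)].
    move=> a b ha hb; split; [| | | |split]; apply: Qx; lia.
  have Hg := @W_grid _ (@quad R) (@quad_lt4 R) (fun u v => 0 < dotp u v) (@dotp_nopp R) G N cells.
  have GN m : G N m = neg2 (fw k l j m).
    by rewrite /G /fw /neg2 /sub2 divff // al1 //= !opprB.
  have G0 m : G 0%N m = neg2 (fw k l i m).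
    by rewrite /G /fw /neg2 /sub2 mul0r al0 //= !opprB.
  have nz0 (a : nat) : (a <= N)%N -> G a a != (0, 0) -> True by [].
  have E1 : W (@quad R) (G^~ 0%N) N = Th i j k.
    by rewrite /Th; congr (W _ _ _); apply/funext => n; rewrite /G /fw mul0r al0.
  have E2 : W (@quad R) (G^~ N) N = Th i j l.
    by rewrite /Th; congr (W _ _ _); apply/funext => n; rewrite /G /fw divff // al1.
  have E3 : W (@quad R) [eta G N] N = Th k l j.
    rewrite /Th -(@W_neg R (fw k l j) N); last first.
      move=> m hm; apply: neg2_neq0; suff : G N m != (0, 0) by rewrite GN.
      apply: dotp_self_neq0; apply: Qx; lia.
    by congr (W _ _ _); apply/funext => m; rewrite GN.
  have E4 : W (@quad R) [eta G 0%N] N = Th k l i.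
    rewrite /Th -(@W_neg R (fw k l i) N); last first.
      move=> m hm; apply: neg2_neq0; suff : G 0%N m != (0, 0) by rewrite G0.
      apply: dotp_self_neq0; apply: Qx; lia.
    by congr (W _ _ _); apply/funext => m; rewrite G0.
  by rewrite -E1 -E2 -E3 -E4.
- apply: allPrP => -[[i j] k] xin.
  move: (good_L30 xin) => /and3P[hi hj /and3P[hk dij /andP[dik djk]]].
  have [n Hn] := W_mod (@quad_lt4 R) (fw i j k) N.
  exists n; rewrite /Th Hn /fw /qd divff // al1 // mul0r al0 //.
- apply: allPrP => -[j k] xin.
  move: (good_L10 xin) => /= /andP[/andP[hj hk] djk].
  rewrite /qd.
  have -> : sub2 (P k) (P j) = neg2 (sub2 (P j) (P k)) by rewrite /sub2 /neg2 /= !opprB.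
  rewrite quad_neg; first exact: mod4_shift (quad_lt4 _).
  apply/eqP => E; apply: (negP (Dv j k hj hk djk)); apply/eqP.
  apply: pinj; [exact: Vv|exact: Vv|].
  move: E; rewrite /sub2 [p (vv j)]surjective_pairing [p (vv k)]surjective_pairing /=.
  case=> /eqP; rewrite subr_eq0 => /eqP -> /eqP; rewrite subr_eq0 => /eqP ->.
  done.
Qed.
End K5.

Section Alg.
Variable R : finComNzRingType.
Implicit Types S J I : {set R}.
Local Notation subsetP := fintype.subsetP.
Local Notation inE := finset.inE.
Local Notation subset_trans := fintype.subset_trans.

Lemma idl0 J : is_idl J -> 0 \in J. Proof. by case. Qed.
Lemma idlD J x y : is_idl J -> x \in J -> y \in J -> x + y \in J.
Proof. by case=> _ [] H _; apply: H. Qed.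
Lemma idlM J r x : is_idl J -> x \in J -> r * x \in J.
Proof. by case=> _ [] _ H; apply: H. Qed.

Lemma idl_sum J (A : {set R}) (F : R -> R) : is_idl J -> (forall s, s \in A -> F s \in J) ->
  \sum_(s in A) F s \in J.
Proof.
move=> hJ hF; apply: (big_ind (fun x => x \in J)); first exact: idl0.
  by move=> x y; apply: idlD.
exact: hF.
Qed.

Lemma gen_idl S : is_idl (ideal_gen S).
Proof.
split; first by rewrite inE; apply/existsP; exists [ffun=> 0]; rewrite big1 // => s _; rewrite ffunE mul0r.
split.
  move=> x y; rewrite !inE => /existsP[c /eqP ->] /existsP[d /eqP ->].
  apply/existsP; exists [ffun s => c s + d s]; rewrite -big_split /=.
  by apply/eqP; apply: eq_bigr => s _; rewrite ffunE mulrDl.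
move=> r x; rewrite !inE => /existsP[c /eqP ->].
apply/existsP; exists [ffun s => r * c s]; rewrite big_distrr /=.
by apply/eqP; apply: eq_bigr => s _; rewrite ffunE mulrA.
Qed.

Lemma gen_sub S : S \subset ideal_gen S.
Proof.
apply/subsetP => s sS; rewrite inE; apply/existsP.
exists [ffun t => if t == s then 1 else 0]; apply/eqP.
rewrite (bigD1 s) //= ffunE eqxx mul1r big1 ?addr0 // => t /andP[_ ts].
by rewrite ffunE (negbTE ts) mul0r.
Qed.

Lemma gen_min S J : is_idl J -> S \subset J -> ideal_gen S \subset J.
Proof.
move=> hJ /subsetP sSJ; apply/subsetP => x; rewrite inE => /existsP[c /eqP ->].
by apply: idl_sum => // s sS; apply: idlM => //; apply: sSJ.
Qed.

Lemma gen_mono S S' : S \subset S' -> ideal_gen S \subset ideal_gen S'.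
Proof.
move=> sS; apply: gen_min; first exact: gen_idl.
exact: subset_trans sS (gen_sub S').
Qed.

Lemma add_idl J I : is_idl J -> is_idl I -> is_idl (ideal_add J I).
Proof.
move=> hJ hI; split.
  rewrite inE; apply/exists_inP; exists 0; first exact: idl0.
  by apply/exists_inP; exists 0; [exact: idl0|rewrite addr0].
split.
  move=> x y; rewrite !inE => /exists_inP[a aJ /exists_inP[b bI /eqP ->]].
  move=> /exists_inP[a' a'J /exists_inP[b' b'I /eqP ->]].
  apply/exists_inP; exists (a + a'); first exact: idlD.
  apply/exists_inP; exists (b + b'); first exact: idlD.
  by rewrite addrACA.
move=> r x; rewrite !inE => /exists_inP[a aJ /exists_inP[b bI /eqP ->]].
apply/exists_inP; exists (r * a); first exact: idlM.
apply/exists_inP; exists (r * b); first exact: idlM.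
by rewrite mulrDr.
Qed.

Lemma add_monol J J' I : J \subset J' -> ideal_add J I \subset ideal_add J' I.
Proof.
move=> /subsetP sJ; apply/subsetP => x; rewrite !inE => /exists_inP[a aJ H].
by apply/exists_inP; exists a => //; apply: sJ.
Qed.

Lemma add_subl J I : is_idl I -> J \subset ideal_add J I.
Proof.
move=> hI; apply/subsetP => x xJ; rewrite inE; apply/exists_inP; exists x => //.
by apply/exists_inP; exists 0; rewrite ?idl0 // addr0.
Qed.

Lemma add_subr J I : is_idl J -> I \subset ideal_add J I.
Proof.
move=> hJ; apply/subsetP => x xI; rewrite inE; apply/exists_inP; exists 0; first exact: idl0.
by apply/exists_inP; exists x; rewrite // add0r.
Qed.

Lemma add_min J I K : is_idl K -> J \subset K -> I \subset K -> ideal_add J I \subset K.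
Proof.
move=> hK /subsetP sJ /subsetP sI; apply/subsetP => x; rewrite inE.
by move=> /exists_inP[a aJ /exists_inP[b bI /eqP ->]]; apply: idlD; [|apply: sJ|apply: sI].
Qed.

Lemma in_coset I s : is_idl I -> s \in cosetI I s.
Proof. by move=> hI; apply/imsetP; exists 0; rewrite ?idl0 ?addr0. Qed.

Lemma bigmin_le (T : eqType) (r : seq T) (P : pred T) (F : T -> nat) x0 j :
  j \in r -> P j -> (\big[minn/x0]_(i <- r | P i) F i <= F j)%N.
Proof.
elim: r => // a r IH; rewrite inE big_cons => /orP[/eqP <-|jr] Pj.
  by rewrite Pj geq_minl.
case: ifP => _; last exact: IH.
by rewrite geq_min IH ?orbT.
Qed.

End Alg.

Local Notation subsetP := fintype.subsetP.
Local Notation inE := finset.inE.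
Local Notation subset_trans := fintype.subset_trans.
Local Notation eqEsubset := finset.eqEsubset.

Theorem proposition3p11 (R : finComNzRingType) (m I : {set R}) :
  local_with_max m ->
  ~ principal_ideal m ->
  proper_idl I ->
  planar (GammaI_vert I) (GammaI_adj I) ->
  (ara_mod I m <= 4)%N.
Proof.
move=> [[hm mT] hmax] _ hIp hpl.
have hI : is_idl I := hIp.1.
have Im : I \subset m := hmax I hIp.
pose gens S := gens_mod I m S.
have gm : gens m.
  rewrite /gens /gens_mod eqEsubset; apply/andP; split.
    by apply: add_min => //; apply: gen_min.
  exact: subset_trans (gen_sub m) (add_subl _ hI).
case: (@arg_minnP _ m gens (fun S => #|imgI I S|) gm) => S0 gS0 minS0.
have mg : min_gens_mod I m S0.
  rewrite /min_gens_mod; apply/andP; split; first exact: gS0.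
  apply/forallP => T; apply/implyP => /andP[TS gT].
  by rewrite eqEcard imsetS //= minS0.
have ara_le : (ara_mod I m <= #|imgI I S0|)%N.
  exact: bigmin_le (mem_index_enum _) mg.
case: (leqP #|imgI I S0| 4) => [h|h]; first exact: leq_trans ara_le h.
exfalso.
have em : ideal_add (ideal_gen S0) I = m by apply/eqP.
have S0m : S0 \subset m by rewrite -em; exact: subset_trans (gen_sub S0) (add_subl _ hI).
pose Ta a := [set s in S0 | cosetI I s != cosetI I a].
have key a : a \in S0 -> a \notin ideal_add (ideal_gen (Ta a)) I.
  move=> aS0; apply/negP => aJ.
  set J := ideal_add (ideal_gen (Ta a)) I.
  have hJ : is_idl J := add_idl (gen_idl _) hI.
  have TaS : Ta a \subset S0 by apply/subsetP => s; rewrite inE => /andP[].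
  have gTa : gens (Ta a).
    rewrite /gens /gens_mod -/J eqEsubset; apply/andP; split.
      by rewrite -em; apply: add_monol; apply: gen_mono.
    rewrite -em; apply: add_min => //; last exact: add_subr (gen_idl _).
    apply: gen_min => //; apply/subsetP => s sS0.
    have [ne|eq] := boolP (cosetI I s != cosetI I a).
      have sTa : s \in Ta a by rewrite inE sS0 ne.
      apply: (subsetP (add_subl _ hI)); exact: (subsetP (gen_sub _)).
    move/negPn/eqP: eq => eq; move: (in_coset s hI); rewrite eq => /imsetP[i iI ->].
    by apply: idlD => //; apply: (subsetP (add_subr _ (gen_idl _))).
  have /eqP E : imgI I (Ta a) == imgI I S0.
    move: mg => /andP[_ /forallP /(_ (Ta a)) /implyP]; apply; apply/andP; split.
      exact: TaS.
    exact: gTa.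
  have : cosetI I a \in imgI I (Ta a) by rewrite E; apply: imset_f.
  case/imsetP => t; rewrite inE => /andP[_ ht] eta.
  by move: ht; rewrite eta eqxx.
pose C := imgI I S0.
pose cs := enum C.
have ucs : uniq cs := enum_uniq _.
have scs : (5 <= size cs)%N by rewrite -cardE.
pose rep c := odflt 0 [pick s in S0 | cosetI I s == c].
have repP c : c \in C -> rep c \in S0 /\ cosetI I (rep c) = c.
  move=> cC; rewrite /rep; case: pickP => [s /andP[sS /eqP <-]|none]; first by [].
  by case/imsetP: cC => s sS eqc; move: (none s); rewrite sS eqc eqxx.
pose vv i := rep (nth (@finset.set0 R) cs i).
have vvP i : (i < 5)%N -> vv i \in S0 /\ cosetI I (vv i) = nth (@finset.set0 R) cs i.
  move=> hi; apply: repP; rewrite -mem_enum; apply: mem_nth; exact: leq_trans hi scs.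
have vvD i j : (i < 5)%N -> (j < 5)%N -> i != j -> cosetI I (vv i) != cosetI I (vv j).
  move=> hi hj hij; rewrite (vvP i hi).2 (vvP j hj).2 nth_uniq //;
    exact: leq_trans _ scs.
have vm i : (i < 5)%N -> vv i \in m by move=> hi; apply: (subsetP S0m); exact: (vvP i hi).1.
have Vv i : (i < 5)%N -> vv i \in GammaI_vert I.
  move=> hi; rewrite inE; apply/andP; split.
    apply/negP => vI; apply: (negP (key _ (vvP i hi).1)).
    exact: (subsetP (add_subr _ (gen_idl _)) _ vI).
  apply/negP => /eqP ET; move/negP: mT; apply; rewrite eqEsubset finset.subsetT /= -ET.
  apply: add_min => //; apply: gen_min => //; rewrite finset.sub1set; exact: vm.
have nin i j : (i < 5)%N -> (j < 5)%N -> i != j -> vv i \notin xRI (vv j) I.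
  move=> hi hj hij; apply/negP => H; apply: (negP (key _ (vvP i hi).1)).
  apply: (subsetP (add_monol _ (gen_mono _))) H.
  by rewrite finset.sub1set inE (vvP j hj).1 eq_sym vvD.
have Dv i j : (i < 5)%N -> (j < 5)%N -> i != j -> vv i != vv j.
  by move=> hi hj hij; apply: contra (vvD i j hi hj hij) => /eqP ->.
apply: (K5_nonplanar hpl Vv _ Dv).
move=> i j hi hj hij; rewrite /GammaI_adj Vv // Vv // Dv // nin // nin //.
by rewrite eq_sym.
Qed.
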